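(* Let $\{(\mathbf{x}^n,\mathbf{Z}^n,\Gamma^n)\}$ be generated by the SPULTRA iteration defined in the context (with exact image update) from some initialization with $\mathbf{x}^0\in\mathcal{X}$. Suppose a subsequence $\{(\mathbf{x}^{q_m},\mathbf{Z}^{q_m-1},\Gamma^{q_m-1})\}_m$ converges to $(\mathbf{x}^*,\mathbf{Z}^{**},\Gamma^{**})$. Then $\{\mathbf{x}^{q_m-1}\}_m$ also converges to $\mathbf{x}^*$, and $\mathbf{x}^*$ is the unique minimizer over $\mathbf{x}$ of $F(\mathbf{x},\mathbf{Z}^{**},\Gamma^{**};\mathbf{x}^* )$.
   Context: Data and model. $\mathbf{A}\in\mathbb{R}^{N_d\times N_p}$ is a matrix with nonnegative entries; write $l_i(\mathbf{x})=[\mathbf{A}\mathbf{x}]_i$. Constants: $I_0>0$, $\sigma^2\ge 0$, measurements $Y_i\in\mathbb{R}$, coefficients $s_{1_i},s_{2_i}\in\mathbb{R}$, $x_{\max}>0$. Let $f_i(l)=s_{1_i}l+s_{2_i}l^2$ and $$h_i(l)=\big(I_0e^{-f_i(l)}+\sigma^2\big)-Y_i\log\big(I_0e^{-f_i(l)}+\sigma^2\big),\qquad \mathsf{L}(\mathbf{x})=\sum_{i=1}^{N_d}h_i(l_i(\mathbf{x})).$$ Let $\mathcal{X}=\{\mathbf{x}\in\mathbb{R}^{N_p}:0\le x_j\le x_{\max}\ \forall j\}$ and $\mathfrak{X}(\mathbf{x})=0$ if $\mathbf{x}\in\mathcal{X}$, $+\infty$ otherwise. Regularizer. For $j=1,\dots,\tilde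 N$, $\mathbf{P}_j\in\mathbb{R}^{v\times N_p}$ extracts the $j$-th patch of $v$ voxels (a row-selection matrix); assume every voxel belongs to at least one patch. $\boldsymbol{\Omega}_1,\dots,\boldsymbol{\Omega}_K\in\mathbb{R}^{v\times v}$ are fixed nonsingular (pre-learned) transforms. Weights $\tau_j>0$, and $\beta>0$, $\gamma_c>0$. Variables: sparse code matrix $\mathbf{Z}=[\mathbf{z}_1,\dots,\mathbf{z}_{\tilde N}]$ with $\mathbf{z}_j\in\mathbb{R}^v$, and class vector $\Gamma\in\{1,\dots,K\}^{\tilde N}$. Define $$\mathsf{R}(\mathbf{x},\mathbf{Z},\Gamma)=\beta\sum_{j=1}^{\tilde N}\tau_j\Big(\|\boldsymbol{\Omega}_{\Gamma_j}\mathbf{P}_j\mathbf{x}-\mathbf{z}_j\|_2^2+\gamma_c^2\|\mathbf{z}_j\|_0\Big),$$ where $\|\cdot\|_0$ counts nonzero entries. The objective is $G(\mathbf{x},\mathbf{Z},\Gamma)=\mathsf{L}(\mathbf{x})+\mathsf{R}(\mathbf{x},\mathbf{Z},\Gamma)+\mathfrak{X}(\mathbf{x})$. Surrogates. Curvature functions $c_i:[0,\infty)\to(0,\infty)$ are continuous and chosen so that, with $$q_i(l;\bar l)=h_i(\bar l)+\dot h_i(\bar l)(l-\bar l)+\tfrac12 c_i(\bar l)(l-\bar l)^2,$$ one has $h_i(l)\le q_i(l;\bar l)$ for all $l\ge0$, $\bar l\ge 0$ (as achieved by the optimum-curvature rule $c_i(\bar l)=2\,[h_i(0)-h_i(\bar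 l)+\bar l\,\dot h_i(\bar l)]/\bar l^2$ for $\bar l>0$, $c_i(0)=\ddot h_i(0)$, with nonpositive values replaced by a small positive constant). For $\bar{\mathbf{x}}\in\mathcal{X}$ define the majorizer $$F(\mathbf{x},\mathbf{Z},\Gamma;\bar{\mathbf{x}})=\sum_{i=1}^{N_d}q_i\big(l_i(\mathbf{x});l_i(\bar{\mathbf{x}})\big)+\mathsf{R}(\mathbf{x},\mathbf{Z},\Gamma)+\mathfrak{X}(\mathbf{x}).$$ SPULTRA iteration (exact version). Given $(\mathbf{x}^n,\mathbf{Z}^n,\Gamma^n)$: image update $\mathbf{x}^{n+1}\in\arg\min_{\mathbf{x}}F(\mathbf{x},\mathbf{Z}^n,\Gamma^n;\mathbf{x}^n)$; then sparse coding and clustering $(\mathbf{Z}^{n+1},\Gamma^{n+1})\in\arg\min_{\mathbf{Z},\Gamma}\mathsf{R}(\mathbf{x}^{n+1},\mathbf{Z},\Gamma)$ (computed exactly: for each $j$, $\Gamma_j^{n+1}$ minimizes over $k$ the value $\|\boldsymbol{\Omega}_k\mathbf{P}_j\mathbf{x}^{n+1}-H_{\gamma_c}(\boldsymbol{\Omega}_k\mathbf{P}_j\mathbf{x}^{n+1})\|_2^2+\gamma_c^2\|H_{\gamma_c}(\boldsymbol{\Omega}_k\mathbf{P}_j\mathbf{x}^{n+1})\|_0$ and $\mathbf{z}_j^{n+1}=H_{\gamma_c}(\boldsymbol{\Omega}_{\Gamma_j^{n+1}}\mathbf{P}_j\mathbf{x}^{n+1})$, where $H_{\gamma_c}$ zeroes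 entries of magnitude less than $\gamma_c$ and keeps the others). *)

(* Defs.v *)
From Stdlib Require Import Reals Lra Lia.
Open Scope R_scope.

Fixpoint sumR (n : nat) (f : nat -> R) : R :=
  match n with
  | O => 0
  | S k => sumR k f + f k
  end.

(* Problem data. Vectors are functions nat -> R (only indices < dimension matter);
   matrices are functions nat -> nat -> R.  Classes are indexed 0..K-1
   (the paper's 1..K). *)
Record spultra_data := {
  Nd : nat;                         (* number of measurements *)
  Np : nat;                         (* number of voxels *)
  v : nat;                          (* patch size *)
  Nt : nat;                         (* number of patches  (N tilde) *)
  K : nat;                          (* number of classes / transforms *)
  A : nat -> nat -> R;
  I0 : R;
  sig2 : R;
  Y : nat -> R;
  s1 : nat -> R;
  s2 : nat -> R;
  xmax : R;
  patch : nat -> nat -> nat;        (* P_j x = (x (patch j 0), ..., x (patch j (v-1))) *)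
  Om : nat -> nat -> nat -> R;      (* Om k r c = entry (r,c) of Omega_k *)
  tau : nat -> R;
  beta : R;
  gc : R;
  curv : nat -> R -> R
}.

Section Defs.
Variable P : spultra_data.

Definition lin (x : nat -> R) (i : nat) : R := sumR (Np P) (fun p => A P i p * x p).

Definition fsc (i : nat) (l : R) : R := s1 P i * l + s2 P i * l ^ 2.
Definition gsc (i : nat) (l : R) : R := I0 P * exp (- fsc i l) + sig2 P.

Definition h (i : nat) (l : R) : R := gsc i l - Y P i * ln (gsc i l).

Definition hdot (i : nat) (l : R) : R :=
  (- (I0 P * exp (- fsc i l)) * (s1 P i + 2 * s2 P i * l)) * (1 - Y P i / gsc i l).

Definition qsur (i : nat) (l lb : R) : R :=
  h i lb + hdot i lb * (l - lb) + / 2 * curv P i lb * (l - lb) ^ 2.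

Definition Lfun (x : nat -> R) : R := sumR (Nd P) (fun i => h i (lin x i)).

Definition inX (x : nat -> R) : Prop := forall p, (p < Np P)%nat -> 0 <= x p <= xmax P.

Definition OmP (k j : nat) (x : nat -> R) (r : nat) : R :=
  sumR (v P) (fun c => Om P k r c * x (patch P j c)).

Definition sqnorm (w : nat -> R) : R := sumR (v P) (fun r => w r ^ 2).

Definition l0 (z : nat -> R) : R :=
  sumR (v P) (fun r => if Req_dec_T (z r) 0 then 0 else 1).

(* R(x, Z, Gamma);  Z j r = (z_j)_r,  G j = Gamma_j *)
Definition Rreg (x : nat -> R) (Z : nat -> nat -> R) (G : nat -> nat) : R :=
  beta P * sumR (Nt P) (fun j =>
    tau P j * (sqnorm (fun r => OmP (G j) j x r - Z j r) + gc P ^ 2 * l0 (Z j))).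

(* finite part of the majorizer F(x, Z, Gamma; xbar) (the indicator of X is
   handled by restricting minimization to X) *)
Definition Fmaj (x : nat -> R) (Z : nat -> nat -> R) (G : nat -> nat) (xb : nat -> R) : R :=
  sumR (Nd P) (fun i => qsur i (lin x i) (lin xb i)) + Rreg x Z G.

Definition valid_class (G : nat -> nat) : Prop := forall j, (j < Nt P)%nat -> (G j < K P)%nat.

Definition spultra_seq (x : nat -> nat -> R) (Z : nat -> nat -> nat -> R)
    (G : nat -> nat -> nat) : Prop :=
  inX (x O) /\ valid_class (G O) /\
  forall n,
    (inX (x (S n)) /\
     forall y, inX y -> Fmaj (x (S n)) (Z n) (G n) (x n) <= Fmaj y (Z n) (G n) (x n)) /\
    (valid_class (G (S n)) /\
     forall Z' G', valid_class G' -> Rreg (x (S n)) (Z (S n)) (G (S n)) <= Rreg (x (S n)) Z' G').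

End Defs.

Lemma hdot_correct (P : spultra_data) i l :
  0 < I0 P -> 0 <= sig2 P -> derivable_pt_lim (h P i) l (hdot P i l).
Proof.
  intros HI Hs.
  assert (Hg : forall t, 0 < gsc P i t).
  { intro t; unfold gsc; pose proof (exp_pos (- fsc P i t)); nra. }
  assert (Hf : derivable_pt_lim (fsc P i) l (s1 P i + 2 * s2 P i * l)).
  { unfold fsc.
    replace (s1 P i + 2 * s2 P i * l) with (s1 P i * 1 + s2 P i * (INR 2 * l ^ (2 - 1))) by (simpl; ring).
    apply derivable_pt_lim_plus.
    - apply derivable_pt_lim_scal. apply derivable_pt_lim_id.
    - apply derivable_pt_lim_scal. apply derivable_pt_lim_pow. }
  assert (HG : derivable_pt_lim (gsc P i) l (- (I0 P * exp (- fsc P i l)) * (s1 P i + 2 * s2 P i * l))).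
  { unfold gsc.
    replace (- (I0 P * exp (- fsc P i l)) * (s1 P i + 2 * s2 P i * l))
      with (I0 P * (exp (- fsc P i l) * - (s1 P i + 2 * s2 P i * l)) + 0) by ring.
    apply derivable_pt_lim_plus; [| apply derivable_pt_lim_const].
    apply derivable_pt_lim_scal.
    apply (derivable_pt_lim_comp (fun t => - fsc P i t) exp).
    - apply derivable_pt_lim_opp. exact Hf.
    - apply derivable_pt_lim_exp. }
  unfold h, hdot.
  set (d := - (I0 P * exp (- fsc P i l)) * (s1 P i + 2 * s2 P i * l)) in *.
  replace (d * (1 - Y P i / gsc P i l)) with (d - Y P i * (/ gsc P i l * d))
    by (unfold Rdiv; ring).
  apply derivable_pt_lim_minus; [exact HG|].
  apply derivable_pt_lim_scal.
  apply (derivable_pt_lim_comp (gsc P i) ln); [exact HG|].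
  apply derivable_pt_lim_ln. apply Hg.
Qed.

(* Main.v *)
Require Import Defs.
From Stdlib Require Import Reals Lra Lia.
Open Scope R_scope.

Module LA.
From mathcomp Require Import all_boot all_algebra.
From mathcomp Require Import Rstruct.
Import GRing.Theory.
Local Open Scope ring_scope.

Lemma sumR_big n (f : nat -> R) : sumR n f = \sum_(i < n) f i.
Proof.
elim: n => [|n IH] /=; first by rewrite big_ord0.
by rewrite big_ord_recr /= IH.
Qed.

Definition ent n (A : 'M[R]_n) (i : 'I_n) (c : nat) : R := oapp (A i) 0 (insub c).

Arguments ent {n}.
Lemma left_inverse (n : nat) (O : nat -> nat -> R) :
 (forall z : nat -> R, (forall r, (r < n)%coq_nat -> sumR n (fun c => Rmult (O r c) (z c)) = R0) ->
     forall c, (c < n)%coq_nat -> z c = R0) ->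
 exists B : nat -> nat -> R, forall c c', (c < n)%coq_nat -> (c' < n)%coq_nat ->
   sumR n (fun r => Rmult (B c r) (O r c')) = if Nat.eqb c c' then R1 else R0.
Proof.
move=> HO.
pose M : 'M[R]_n := \matrix_(i < n, j < n) O i j.
have Hker : kermx M^T = 0%R.
  apply/matrixP => i c; rewrite [X in _ = X]mxE.
  have H := fun Hs => HO (ent (kermx M^T) i) Hs c (elimT ltP (ltn_ord c)).
  rewrite /ent valK /= in H. apply: H.
  move=> r /ltP Hr.
  rewrite sumR_big.
  have E := congr1 (fun A : 'M[R]_n => A i (Ordinal Hr)) (mulmx_ker M^T).
  rewrite /= [X in _ = X]mxE mxE in E.
  apply: etrans; last exact E.
  apply: eq_bigr => k _. rewrite valK /= [RHS]mulrC (_ : M^T k (Ordinal Hr) = O r k) //; by rewrite !mxE.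
have HU : M \in unitmx.
  by rewrite -unitmx_tr -row_free_unit -kermx_eq0 Hker.
pose Bm := invmx M.
exists (fun c r => match insub c, insub r with Some c1, Some r1 => Bm c1 r1 | _, _ => 0 end).
move=> c c' /ltP Hc /ltP Hc'.
rewrite sumR_big.
have := congr1 (fun A : 'M[R]_n => A (Ordinal Hc) (Ordinal Hc')) (mulVmx HU).
rewrite !mxE.
move=> E.
transitivity ((Ordinal Hc == Ordinal Hc')%:R : R).
  rewrite -E; apply: eq_bigr => k _.
  have -> : insub c = Some (Ordinal Hc) by apply: insubT.
  rewrite valK /Bm !mxE //.
case: eqP => [[->]|Hne]; first by rewrite Nat.eqb_refl.
case: (Nat.eqb_spec c c') => // Heq.
by exfalso; apply: Hne; apply: val_inj.
Qed.
End LA.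


Lemma sumR_ext n f g : (forall i, (i < n)%nat -> f i = g i) -> sumR n f = sumR n g.
Proof.
  induction n as [|n IH]; intros H; simpl; [reflexivity|].
  rewrite IH by (intros; apply H; lia). rewrite H by lia. reflexivity.
Qed.

Lemma sumR_lin3 n f g k a b c :
  sumR n (fun i => a * f i + b * g i + c * k i) = a * sumR n f + b * sumR n g + c * sumR n k.
Proof. induction n as [|n IH]; simpl; [ring|]. rewrite IH. ring. Qed.

Lemma sumR_lin2 n f g a b :
  sumR n (fun i => a * f i + b * g i) = a * sumR n f + b * sumR n g.
Proof. induction n as [|n IH]; simpl; [ring|]. rewrite IH. ring. Qed.

Lemma sumR_plus n f g : sumR n (fun i => f i + g i) = sumR n f + sumR n g.
Proof. induction n as [|n IH]; simpl; [ring|]. rewrite IH. ring. Qed.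

Lemma sumR_scal n f a : sumR n (fun i => a * f i) = a * sumR n f.
Proof. induction n as [|n IH]; simpl; [ring|]. rewrite IH. ring. Qed.

Lemma sumR_le n f g : (forall i, (i < n)%nat -> f i <= g i) -> sumR n f <= sumR n g.
Proof.
  induction n as [|n IH]; intros H; simpl; [lra|].
  assert (sumR n f <= sumR n g) by (apply IH; intros; apply H; lia).
  assert (f n <= g n) by (apply H; lia). lra.
Qed.

Lemma sumR_nonneg n f : (forall i, (i < n)%nat -> 0 <= f i) -> 0 <= sumR n f.
Proof.
  intros H. replace 0 with (sumR n (fun _ => 0)).
  - apply sumR_le; auto.
  - induction n; simpl; [reflexivity|]. rewrite IHn; [ring|]. intros; apply H; lia.
Qed.

Lemma sumR_term n f i : (forall i, (i < n)%nat -> 0 <= f i) -> (i < n)%nat -> f i <= sumR n f.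
Proof.
  induction n as [|n IH]; intros H Hi; simpl; [lia|].
  destruct (Nat.eq_dec i n) as [->|Hne].
  - assert (0 <= sumR n f) by (apply sumR_nonneg; intros; apply H; lia). lra.
  - assert (f i <= sumR n f) by (apply IH; [intros; apply H; lia | lia]).
    assert (0 <= f n) by (apply H; lia). lra.
Qed.

Lemma sumR_swap n m (f : nat -> nat -> R) :
  sumR n (fun i => sumR m (fun j => f i j)) = sumR m (fun j => sumR n (fun i => f i j)).
Proof.
  induction n as [|n IH]; simpl.
  - induction m; simpl; [reflexivity|]. rewrite <- IHm. ring.
  - rewrite IH. rewrite <- sumR_plus. reflexivity.
Qed.

Lemma sumR_delta n c (w : nat -> R) : (c < n)%nat ->
  sumR n (fun c' => (if Nat.eqb c c' then R1 else R0) * w c') = w c.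
Proof.
  induction n as [|n IH]; intros Hc; simpl; [lia|].
  destruct (Nat.eq_dec c n) as [->|Hne].
  - rewrite Nat.eqb_refl.
    replace (sumR n (fun c' => (if Nat.eqb n c' then R1 else R0) * w c')) with 0.
    + ring.
    + clear IH Hc. transitivity (sumR n (fun _ => 0 * 0)).
      * induction n; simpl; [reflexivity|]. rewrite <- IHn. ring.
      * apply sumR_ext. intros i Hi. destruct (Nat.eqb_spec n i); [lia|]. ring.
  - rewrite IH by lia. destruct (Nat.eqb_spec c n); [lia|]. ring.
Qed.

Lemma Un_cv_ext u v l : (forall n, u n = v n) -> Un_cv u l -> Un_cv v l.
Proof. intros E H e He. destruct (H e He) as [N HN]. exists N. intros n Hn. rewrite <- E. auto. Qed.

Lemma Un_cv_ev u v l : (exists M, forall n, (M <= n)%nat -> u n = v n) -> Un_cv u l -> Un_cv v l.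
Proof.
  intros [M E] H e He. destruct (H e He) as [N HN]. exists (max M N). intros n Hn.
  rewrite <- E by lia. apply HN. lia.
Qed.

Lemma Un_cv_const c : Un_cv (fun _ => c) c.
Proof. intros e He. exists O. intros. unfold Rdist. rewrite Rminus_diag, Rabs_R0. lra. Qed.

Lemma Un_cv_sumR n (f : nat -> nat -> R) (l : nat -> R) :
  (forall i, (i < n)%nat -> Un_cv (fun m => f m i) (l i)) ->
  Un_cv (fun m => sumR n (f m)) (sumR n l).
Proof.
  induction n as [|n IH]; intros H; simpl.
  - apply Un_cv_const.
  - apply CV_plus; [apply IH; intros; apply H; lia | apply H; lia].
Qed.

Lemma Un_cv_pow2 u l : Un_cv u l -> Un_cv (fun m => u m ^ 2) (l ^ 2).
Proof.
  intros H. replace (l ^ 2) with (l * l) by ring.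
  apply Un_cv_ext with (fun m => u m * u m); [intros; ring|]. apply CV_mult; auto.
Qed.

Lemma Un_cv_scal c u l : Un_cv u l -> Un_cv (fun m => c * u m) (c * l).
Proof. intros H. apply CV_mult; [apply Un_cv_const|auto]. Qed.

Lemma Un_cv_sub u (s : nat -> nat) l : (forall m, (m <= s m)%nat) -> Un_cv u l -> Un_cv (fun m => u (s m)) l.
Proof. intros Hs H e He. destruct (H e He) as [N HN]. exists N. intros n Hn. apply HN. specialize (Hs n). lia. Qed.

Lemma Un_cv_squeeze0 u d c : 0 < c -> (forall n, c * u n ^ 2 <= d n) -> Un_cv d 0 -> Un_cv u 0.
Proof.
  intros Hc Hb H e He. destruct (H (c * (e * e)) ltac:(apply Rmult_lt_0_compat; nra)) as [N HN].
  exists N. intros n Hn. specialize (HN n Hn). specialize (Hb n). unfold Rdist in *.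
  rewrite Rminus_0_r in *. pose proof (Rabs_pos (u n)).
  destruct (Rlt_or_le (Rabs (u n)) e) as [|Hge]; [assumption|exfalso].
  assert (Hd : d n < c * (e * e)) by (pose proof (Rle_abs (d n)); lra).
  assert (u n ^ 2 = Rabs (u n) * Rabs (u n)) by (rewrite <- Rabs_mult; rewrite Rabs_right; [ring| nra]).
  assert (e * e <= Rabs (u n) * Rabs (u n)) by nra. nra.
Qed.

Lemma Un_cv_limit1_in f u l : (forall n, 0 <= u n) -> Un_cv u l ->
  limit1_in f (fun t => 0 <= t) (f l) l -> Un_cv (fun m => f (u m)) (f l).
Proof.
  intros Hp H Hl e He. destruct (Hl e He) as [a [Ha Hf]].
  destruct (H a Ha) as [N HN]. exists N. intros n Hn. apply (Hf (u n)). split; [apply Hp|]. apply HN; auto.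
Qed.

Lemma Un_cv_le_const u l a : (forall n, u n <= a) -> Un_cv u l -> l <= a.
Proof. intros H Hc. apply (Rle_cv_lim (Un:=u) (Vn:=fun _ => a)); auto. apply Un_cv_const. Qed.
Lemma Un_cv_ge_const u l a : (forall n, a <= u n) -> Un_cv u l -> a <= l.
Proof. intros H Hc. apply (Rle_cv_lim (Un:=fun _ => a) (Vn:=u)); auto. apply Un_cv_const. Qed.

Definition mid (a b : nat -> R) : nat -> R := fun p => (a p + b p) / 2.

Definition Dq (P : spultra_data) (a b : nat -> R) (Z : nat -> nat -> R) (G : nat -> nat) (xb : nat -> R) : R :=
  sumR (Nd P) (fun i => curv P i (lin P xb i) * (lin P a i - lin P b i) ^ 2) +
  2 * beta P * sumR (Nt P) (fun j => tau P j *
     sqnorm P (fun r => OmP P (G j) j a r - OmP P (G j) j b r)).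

Lemma lin_mid P a b i : lin P (mid a b) i = (lin P a i + lin P b i) / 2.
Proof.
  unfold lin, mid. rewrite (sumR_ext _ _ (fun p => /2 * (A P i p * a p) + /2 * (A P i p * b p))).
  - rewrite sumR_lin2. field.
  - intros; field.
Qed.

Lemma OmP_mid P k j a b r : OmP P k j (mid a b) r = (OmP P k j a r + OmP P k j b r) / 2.
Proof.
  unfold OmP, mid. rewrite (sumR_ext _ _ (fun c => /2 * (Om P k r c * a (patch P j c)) + /2 * (Om P k r c * b (patch P j c)))).
  - rewrite sumR_lin2. field.
  - intros; field.
Qed.

Lemma OmP_sub P k j a b r : OmP P k j a r - OmP P k j b r =
  sumR (v P) (fun c => Om P k r c * (a (patch P j c) - b (patch P j c))).
Proof.
  symmetry. unfold OmP. rewrite (sumR_ext _ _ (fun c => 1 * (Om P k r c * a (patch P j c)) + (-1) * (Om P k r c * b (patch P j c)))).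
  - rewrite sumR_lin2. ring.
  - intros; ring.
Qed.

Lemma sqnorm_ext P u w : (forall r, (r < v P)%nat -> u r = w r) -> sqnorm P u = sqnorm P w.
Proof. intros H. unfold sqnorm. apply sumR_ext. intros r Hr. rewrite H; auto. Qed.

Lemma sqnorm_mid P (u w z : nat -> R) :
  sqnorm P (fun r => (u r + w r) / 2 - z r) =
  (sqnorm P (fun r => u r - z r) + sqnorm P (fun r => w r - z r)) / 2 - sqnorm P (fun r => u r - w r) / 4.
Proof.
  unfold sqnorm.
  rewrite (sumR_ext _ _ (fun r => /2 * ((u r - z r) ^ 2) + /2 * ((w r - z r) ^ 2) + (-/4) * ((u r - w r) ^ 2))).
  - rewrite sumR_lin3. field.
  - intros; field.
Qed.

Lemma Fmaj_mid P a b Z G xb :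
  Fmaj P (mid a b) Z G xb = (Fmaj P a Z G xb + Fmaj P b Z G xb) / 2 - Dq P a b Z G xb / 8.
Proof.
  unfold Fmaj, Dq, Rreg.
  rewrite (sumR_ext (Nd P) (fun i => qsur P i (lin P (mid a b) i) (lin P xb i))
     (fun i => /2 * qsur P i (lin P a i) (lin P xb i) + /2 * qsur P i (lin P b i) (lin P xb i)
       + (-/8) * (curv P i (lin P xb i) * (lin P a i - lin P b i) ^ 2))).
  2:{ intros i _. rewrite lin_mid. unfold qsur. field. }
  rewrite sumR_lin3.
  rewrite (sumR_ext (Nt P) _
     (fun j => /2 * (tau P j * (sqnorm P (fun r => OmP P (G j) j a r - Z j r) + gc P ^ 2 * l0 P (Z j)))
       + /2 * (tau P j * (sqnorm P (fun r => OmP P (G j) j b r - Z j r) + gc P ^ 2 * l0 P (Z j)))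
       + (-/4) * (tau P j * sqnorm P (fun r => OmP P (G j) j a r - OmP P (G j) j b r)))).
  2:{ intros j _.
      rewrite (sqnorm_ext P _ (fun r => (OmP P (G j) j a r + OmP P (G j) j b r) / 2 - Z j r))
        by (intros; rewrite OmP_mid; reflexivity).
      rewrite sqnorm_mid. field. }
  rewrite sumR_lin3. field.
Qed.

Lemma mid_inX P a b : inX P a -> inX P b -> inX P (mid a b).
Proof. intros Ha Hb p Hp. specialize (Ha p Hp). specialize (Hb p Hp). unfold mid. lra. Qed.

Lemma lin_nonneg P x i : (forall i p, (i < Nd P)%nat -> (p < Np P)%nat -> 0 <= A P i p) ->
  inX P x -> (i < Nd P)%nat -> 0 <= lin P x i.
Proof.
  intros HA Hx Hi. unfold lin. apply sumR_nonneg. intros p Hp.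
  specialize (HA i p Hi Hp). specialize (Hx p Hp). nra.
Qed.

Lemma lin_le P x i : (forall i p, (i < Nd P)%nat -> (p < Np P)%nat -> 0 <= A P i p) ->
  inX P x -> (i < Nd P)%nat -> lin P x i <= sumR (Np P) (fun p => A P i p * xmax P).
Proof.
  intros HA Hx Hi. unfold lin. apply sumR_le. intros p Hp.
  specialize (HA i p Hi Hp). specialize (Hx p Hp). nra.
Qed.

Lemma Fmin_bound P a b Z G xb : inX P a -> inX P b ->
  (forall y, inX P y -> Fmaj P a Z G xb <= Fmaj P y Z G xb) ->
  Dq P a b Z G xb <= 4 * (Fmaj P b Z G xb - Fmaj P a Z G xb).
Proof.
  intros Ha Hb Hm. pose proof (Hm (mid a b) (mid_inX P a b Ha Hb)). rewrite Fmaj_mid in H. lra.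
Qed.

Lemma sqnorm_nonneg P w : 0 <= sqnorm P w.
Proof. unfold sqnorm. apply sumR_nonneg. intros. apply pow2_ge_0. Qed.

Lemma sqnorm_term P w r : (r < v P)%nat -> w r ^ 2 <= sqnorm P w.
Proof. intros. unfold sqnorm. apply (sumR_term _ (fun r => w r ^ 2)); auto. intros; apply pow2_ge_0. Qed.

Lemma Dq_term P a b Z G xb j r :
  (forall i p, (i < Nd P)%nat -> (p < Np P)%nat -> 0 <= A P i p) ->
  (forall i, (i < Nd P)%nat -> forall l, 0 <= l -> 0 < curv P i l) ->
  (forall j, (j < Nt P)%nat -> 0 < tau P j) -> 0 < beta P ->
  inX P xb -> (j < Nt P)%nat -> (r < v P)%nat ->
  2 * beta P * tau P j * (OmP P (G j) j a r - OmP P (G j) j b r) ^ 2 <= Dq P a b Z G xb.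
Proof.
  intros HA Hc Ht Hb Hx Hj Hr. unfold Dq.
  assert (0 <= sumR (Nd P) (fun i => curv P i (lin P xb i) * (lin P a i - lin P b i) ^ 2)).
  { apply sumR_nonneg. intros i Hi. apply Rmult_le_pos; [|apply pow2_ge_0].
    left. apply Hc; auto. apply lin_nonneg; auto. }
  assert (tau P j * sqnorm P (fun r => OmP P (G j) j a r - OmP P (G j) j b r) <=
     sumR (Nt P) (fun j => tau P j * sqnorm P (fun r => OmP P (G j) j a r - OmP P (G j) j b r))).
  { apply (sumR_term _ (fun j => tau P j * sqnorm P (fun r => OmP P (G j) j a r - OmP P (G j) j b r))); auto.
    intros j' Hj'. apply Rmult_le_pos; [left; auto|apply sqnorm_nonneg]. }
  pose proof (sqnorm_term P (fun r => OmP P (G j) j a r - OmP P (G j) j b r) r Hr). simpl in H1.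
  pose proof (Ht j Hj).
  assert (tau P j * (OmP P (G j) j a r - OmP P (G j) j b r) ^ 2 <=
          tau P j * sqnorm P (fun r => OmP P (G j) j a r - OmP P (G j) j b r)) by (apply Rmult_le_compat_l; lra).
  assert (0 <= 2 * beta P) by lra.
  assert (2 * beta P * (tau P j * (OmP P (G j) j a r - OmP P (G j) j b r) ^ 2) <= 2 * beta P *
     sumR (Nt P) (fun j => tau P j * sqnorm P (fun r => OmP P (G j) j a r - OmP P (G j) j b r))).
  { apply Rmult_le_compat_l; lra. }
  lra.
Qed.

Lemma Dq_nonneg P a b Z G xb :
  (forall i p, (i < Nd P)%nat -> (p < Np P)%nat -> 0 <= A P i p) ->
  (forall i, (i < Nd P)%nat -> forall l, 0 <= l -> 0 < curv P i l) ->
  (forall j, (j < Nt P)%nat -> 0 < tau P j) -> 0 < beta P ->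
  inX P xb -> 0 <= Dq P a b Z G xb.
Proof.
  intros HA Hc Ht Hb Hx. unfold Dq.
  assert (0 <= sumR (Nd P) (fun i => curv P i (lin P xb i) * (lin P a i - lin P b i) ^ 2)).
  { apply sumR_nonneg. intros i Hi. apply Rmult_le_pos; [|apply pow2_ge_0].
    left. apply Hc; auto. apply lin_nonneg; auto. }
  assert (0 <= sumR (Nt P) (fun j => tau P j * sqnorm P (fun r => OmP P (G j) j a r - OmP P (G j) j b r))).
  { apply sumR_nonneg. intros j' Hj'. apply Rmult_le_pos; [left; auto|apply sqnorm_nonneg]. }
  assert (0 <= 2 * beta P * sumR (Nt P) (fun j => tau P j * sqnorm P (fun r => OmP P (G j) j a r - OmP P (G j) j b r))).
  { apply Rmult_le_pos; lra. }
  lra.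
Qed.

Lemma F_self P xb Z G : Fmaj P xb Z G xb = Lfun P xb + Rreg P xb Z G.
Proof.
  unfold Fmaj, Lfun. f_equal. apply sumR_ext. intros. unfold qsur. ring.
Qed.

Lemma F_maj P y Z G xb :
  (forall i p, (i < Nd P)%nat -> (p < Np P)%nat -> 0 <= A P i p) ->
  (forall i, (i < Nd P)%nat -> forall l lb, 0 <= l -> 0 <= lb -> h P i l <= qsur P i l lb) ->
  inX P y -> inX P xb -> Lfun P y + Rreg P y Z G <= Fmaj P y Z G xb.
Proof.
  intros HA Hm Hy Hx. unfold Fmaj, Lfun.
  assert (sumR (Nd P) (fun i => h P i (lin P y i)) <= sumR (Nd P) (fun i => qsur P i (lin P y i) (lin P xb i))).
  { apply sumR_le. intros i Hi. apply Hm; auto; apply lin_nonneg; auto. }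
  lra.
Qed.

Lemma l0_nonneg P z : 0 <= l0 P z.
Proof. unfold l0. apply sumR_nonneg. intros. destruct (Req_dec_T (z i) 0); lra. Qed.

Lemma Rreg_nonneg P x Z G : (forall j, (j < Nt P)%nat -> 0 < tau P j) -> 0 < beta P -> 0 <= Rreg P x Z G.
Proof.
  intros Ht Hb. unfold Rreg. apply Rmult_le_pos; [lra|]. apply sumR_nonneg. intros j Hj.
  apply Rmult_le_pos; [left; auto|]. pose proof (sqnorm_nonneg P (fun r => OmP P (G j) j x r - Z j r)).
  pose proof (l0_nonneg P (Z j)). pose proof (pow2_ge_0 (gc P)). nra.
Qed.

Lemma fsc_der P i l : derivable_pt_lim (fsc P i) l (s1 P i + 2 * s2 P i * l).
Proof.
  unfold fsc.
  replace (s1 P i + 2 * s2 P i * l) with (s1 P i * 1 + s2 P i * (INR 2 * l ^ (2 - 1))) by (simpl; ring).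
  apply derivable_pt_lim_plus.
  - apply derivable_pt_lim_scal. apply derivable_pt_lim_id.
  - apply derivable_pt_lim_scal. apply derivable_pt_lim_pow.
Qed.

Lemma h_cont P i l : 0 < I0 P -> 0 <= sig2 P -> continuity_pt (h P i) l.
Proof.
  intros. apply derivable_continuous_pt. exists (hdot P i l). apply hdot_correct; auto.
Qed.

Lemma Lfun_lb P : (forall i p, (i < Nd P)%nat -> (p < Np P)%nat -> 0 <= A P i p) ->
  0 < I0 P -> 0 <= sig2 P -> 0 < xmax P ->
  exists m, forall y, inX P y -> m <= Lfun P y.
Proof.
  intros HA HI Hs Hxm. unfold Lfun.
  assert (forall k, (k <= Nd P)%nat -> exists m, forall y, inX P y -> m <= sumR k (fun i => h P i (lin P y i))).
  { induction k as [|k IH]; intros Hk.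
    - exists 0. intros; simpl; lra.
    - destruct IH as [m Hm]; [lia|].
      set (L := sumR (Np P) (fun p => A P k p * xmax P)).
      assert (HL : 0 <= L) by (unfold L; apply sumR_nonneg; intros p Hp; specialize (HA k p ltac:(lia) Hp); nra).
      destruct (continuity_ab_min (h P k) 0 L HL) as [mx [Hmx _]].
      { intros; apply h_cont; auto. }
      exists (m + h P k mx). intros y Hy. simpl. specialize (Hm y Hy).
      assert (h P k mx <= h P k (lin P y k)).
      { apply Hmx. split; [apply lin_nonneg|apply lin_le]; auto; lia. }
      lra. }
  apply H. lia.
Qed.

Lemma gsc_der P i l : derivable_pt_lim (gsc P i) l (- (I0 P * exp (- fsc P i l)) * (s1 P i + 2 * s2 P i * l)).
Proof.
  unfold gsc.
  replace (- (I0 P * exp (- fsc P i l)) * (s1 P i + 2 * s2 P i * l))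
    with (I0 P * (exp (- fsc P i l) * - (s1 P i + 2 * s2 P i * l)) + 0) by ring.
  apply derivable_pt_lim_plus; [| apply derivable_pt_lim_const].
  apply derivable_pt_lim_scal.
  apply (derivable_pt_lim_comp (fun t => - fsc P i t) exp).
  - apply derivable_pt_lim_opp. apply fsc_der.
  - apply derivable_pt_lim_exp.
Qed.

Lemma gsc_pos P i t : 0 < I0 P -> 0 <= sig2 P -> 0 < gsc P i t.
Proof. intros. unfold gsc; pose proof (exp_pos (- fsc P i t)). nra. Qed.

Lemma gsc_seq P i u l : Un_cv u l -> Un_cv (fun m => gsc P i (u m)) (gsc P i l).
Proof.
  intros H. apply continuity_seq; auto. apply derivable_continuous_pt. eexists. apply gsc_der.
Qed.

Lemma hdot_seq P i u l : 0 < I0 P -> 0 <= sig2 P -> Un_cv u l -> Un_cv (fun m => hdot P i (u m)) (hdot P i l).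
Proof.
  intros HI Hs H.
  assert (E : forall t, hdot P i t = (- (gsc P i t - sig2 P) * (s1 P i + 2 * s2 P i * t)) * (1 - Y P i * / gsc P i t)).
  { intros t. unfold hdot, gsc. unfold Rdiv. ring. }
  rewrite E. apply Un_cv_ext with (fun m => (- (gsc P i (u m) - sig2 P) * (s1 P i + 2 * s2 P i * u m)) * (1 - Y P i * / gsc P i (u m))).
  { intros; rewrite E; reflexivity. }
  pose proof (gsc_seq P i u l H) as Hg.
  assert (Hinv : Un_cv (fun m => / gsc P i (u m)) (/ gsc P i l)).
  { apply (continuity_seq (fun t => / t)); auto.
    apply (continuity_pt_inv id). apply derivable_continuous_pt, derivable_pt_id.
    unfold id. pose proof (gsc_pos P i l HI Hs). lra. }
  apply CV_mult.
  - apply CV_mult.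
    + replace (- (gsc P i l - sig2 P)) with ((-1) * (gsc P i l - sig2 P)) by ring.
      apply Un_cv_ext with (fun m => (-1) * (gsc P i (u m) - sig2 P)); [intros; ring|].
      apply Un_cv_scal. apply CV_minus; auto. apply Un_cv_const.
    + apply CV_plus; [apply Un_cv_const|].
      apply Un_cv_scal; auto.
  - apply CV_minus; [apply Un_cv_const|]. apply Un_cv_scal; auto.
Qed.

Lemma h_seq P i u l : 0 < I0 P -> 0 <= sig2 P -> Un_cv u l -> Un_cv (fun m => h P i (u m)) (h P i l).
Proof. intros. apply continuity_seq; auto. apply h_cont; auto. Qed.

Lemma qsur_seq P i ua la ub lb : 0 < I0 P -> 0 <= sig2 P ->
  (forall m, 0 <= ub m) -> limit1_in (curv P i) (fun t => 0 <= t) (curv P i lb) lb ->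
  Un_cv ua la -> Un_cv ub lb ->
  Un_cv (fun m => qsur P i (ua m) (ub m)) (qsur P i la lb).
Proof.
  intros HI Hs Hp Hc Ha Hb. unfold qsur.
  apply CV_plus; [apply CV_plus|].
  - apply h_seq; auto.
  - apply CV_mult; [apply hdot_seq; auto| apply CV_minus; auto].
  - apply CV_mult; [apply Un_cv_scal; apply Un_cv_limit1_in; auto|].
    apply Un_cv_pow2. apply CV_minus; auto.
Qed.

Lemma lin_seq P (a : nat -> nat -> R) al i :
  (forall p, (p < Np P)%nat -> Un_cv (fun m => a m p) (al p)) ->
  Un_cv (fun m => lin P (a m) i) (lin P al i).
Proof.
  intros H. unfold lin. apply (Un_cv_sumR _ (fun m p => A P i p * a m p)). intros p Hp.
  apply Un_cv_scal; auto.
Qed.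

Lemma OmP_seq P k j (a : nat -> nat -> R) al r :
  (forall j r, (j < Nt P)%nat -> (r < v P)%nat -> (patch P j r < Np P)%nat) -> (j < Nt P)%nat ->
  (forall p, (p < Np P)%nat -> Un_cv (fun m => a m p) (al p)) ->
  Un_cv (fun m => OmP P k j (a m) r) (OmP P k j al r).
Proof.
  intros Hpr Hj H. unfold OmP. apply (Un_cv_sumR _ (fun m c => Om P k r c * a m (patch P j c))). intros c Hc.
  apply Un_cv_scal; auto.
Qed.

Definition Fsm (P : spultra_data) (y : nat -> R) (Z : nat -> nat -> R) (G : nat -> nat) (xb : nat -> R) : R :=
  sumR (Nd P) (fun i => qsur P i (lin P y i) (lin P xb i)) +
  beta P * sumR (Nt P) (fun j => tau P j * sqnorm P (fun r => OmP P (G j) j y r - Z j r)).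

Definition Lz (P : spultra_data) (Z : nat -> nat -> R) : R :=
  beta P * sumR (Nt P) (fun j => tau P j * (gc P ^ 2 * l0 P (Z j))).

Lemma Fmaj_split P y Z G xb : Fmaj P y Z G xb = Fsm P y Z G xb + Lz P Z.
Proof.
  unfold Fmaj, Fsm, Lz, Rreg.
  rewrite (sumR_ext (Nt P) _ (fun j => 1 * (tau P j * sqnorm P (fun r => OmP P (G j) j y r - Z j r)) +
     1 * (tau P j * (gc P ^ 2 * l0 P (Z j))))) by (intros; ring).
  rewrite sumR_lin2. ring.
Qed.

Lemma Fsm_cv P (a b : nat -> nat -> R) (Zm : nat -> nat -> nat -> R) (Gm : nat -> nat -> nat)
   al bl Zl Gl :
  (forall i p, (i < Nd P)%nat -> (p < Np P)%nat -> 0 <= A P i p) ->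
  0 < I0 P -> 0 <= sig2 P ->
  (forall j r, (j < Nt P)%nat -> (r < v P)%nat -> (patch P j r < Np P)%nat) ->
  (forall i, (i < Nd P)%nat -> forall l, 0 <= l ->
      limit1_in (curv P i) (fun t => 0 <= t) (curv P i l) l) ->
  (forall p, (p < Np P)%nat -> Un_cv (fun m => a m p) (al p)) ->
  (forall p, (p < Np P)%nat -> Un_cv (fun m => b m p) (bl p)) ->
  (forall j r, (j < Nt P)%nat -> (r < v P)%nat -> Un_cv (fun m => Zm m j r) (Zl j r)) ->
  (forall j, (j < Nt P)%nat -> exists M, forall m, (M <= m)%nat -> Gm m j = Gl j) ->
  (forall m, inX P (b m)) -> inX P bl ->
  Un_cv (fun m => Fsm P (a m) (Zm m) (Gm m) (b m)) (Fsm P al Zl Gl bl).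
Proof.
  intros HA HI Hs Hpr Hc Ha Hb HZ HG Hbm Hbl. unfold Fsm.
  apply CV_plus.
  - apply (Un_cv_sumR _ (fun m i => qsur P i (lin P (a m) i) (lin P (b m) i))). intros i Hi.
    apply qsur_seq; auto.
    + intros; apply lin_nonneg; auto.
    + apply Hc; auto. apply lin_nonneg; auto.
    + apply lin_seq; auto.
    + apply lin_seq; auto.
  - apply Un_cv_scal.
    apply (Un_cv_sumR _ (fun m j => tau P j * sqnorm P (fun r => OmP P (Gm m j) j (a m) r - Zm m j r))).
    intros j Hj.
    apply Un_cv_ev with (fun m => tau P j * sqnorm P (fun r => OmP P (Gl j) j (a m) r - Zm m j r)).
    { destruct (HG j Hj) as [M HM]. exists M. intros m Hm. rewrite HM; auto. }
    apply Un_cv_scal. unfold sqnorm.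
    apply (Un_cv_sumR _ (fun m r => (OmP P (Gl j) j (a m) r - Zm m j r) ^ 2)). intros r Hr.
    apply Un_cv_pow2. apply CV_minus; [apply OmP_seq; auto| apply HZ; auto].
Qed.

Lemma Un_cv_squeeze d e : (forall n, 0 <= d n <= e n) -> Un_cv e 0 -> Un_cv d 0.
Proof.
  intros H He eps Heps. destruct (He eps Heps) as [N HN]. exists N. intros n Hn.
  specialize (HN n Hn). specialize (H n). unfold Rdist in *. rewrite Rminus_0_r in *.
  rewrite Rabs_right by lra. pose proof (Rle_abs (e n)). lra.
Qed.

Lemma inv_apply n (O B : nat -> nat -> R) (w : nat -> R) c :
  (forall c c', (c < n)%nat -> (c' < n)%nat ->
     sumR n (fun r => B c r * O r c') = if Nat.eqb c c' then R1 else R0) -> (c < n)%nat ->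
  sumR n (fun r => B c r * sumR n (fun c' => O r c' * w c')) = w c.
Proof.
  intros HB Hc.
  rewrite (sumR_ext _ _ (fun r => sumR n (fun c' => w c' * (B c r * O r c')))).
  2:{ intros r Hr. rewrite <- sumR_scal. apply sumR_ext. intros; ring. }
  rewrite sumR_swap.
  rewrite (sumR_ext _ _ (fun c' => (if Nat.eqb c c' then R1 else R0) * w c')).
  2:{ intros c' Hc'. rewrite sumR_scal. rewrite HB by auto. ring. }
  apply sumR_delta; auto.
Qed.

Theorem lemma1 (P : spultra_data)
  (HA : forall i p, (i < Nd P)%nat -> (p < Np P)%nat -> 0 <= A P i p)
  (HI0 : 0 < I0 P) (Hsig : 0 <= sig2 P) (Hxmax : 0 < xmax P)
  (Hpatch_rng : forall j r, (j < Nt P)%nat -> (r < v P)%nat -> (patch P j r < Np P)%nat)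
  (Hpatch_inj : forall j r1 r2, (j < Nt P)%nat -> (r1 < v P)%nat -> (r2 < v P)%nat ->
      patch P j r1 = patch P j r2 -> r1 = r2)
  (Hcover : forall p, (p < Np P)%nat ->
      exists j r, (j < Nt P)%nat /\ (r < v P)%nat /\ patch P j r = p)
  (HOm : forall k, (k < K P)%nat -> forall z : nat -> R,
      (forall r, (r < v P)%nat -> sumR (v P) (fun c => Om P k r c * z c) = 0) ->
      forall c, (c < v P)%nat -> z c = 0)
  (Htau : forall j, (j < Nt P)%nat -> 0 < tau P j)
  (Hbeta : 0 < beta P) (Hgc : 0 < gc P)
  (Hc_cont : forall i, (i < Nd P)%nat -> forall l, 0 <= l ->
      limit1_in (curv P i) (fun t => 0 <= t) (curv P i l) l)
  (Hc_pos : forall i, (i < Nd P)%nat -> forall l, 0 <= l -> 0 < curv P i l)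
  (Hmaj : forall i, (i < Nd P)%nat -> forall l lb, 0 <= l -> 0 <= lb ->
      h P i l <= qsur P i l lb)
  (x : nat -> nat -> R) (Z : nat -> nat -> nat -> R) (G : nat -> nat -> nat)
  (Hseq : spultra_seq P x Z G)
  (q : nat -> nat) (Hq_incr : forall m, (q m < q (S m))%nat) (Hq_pos : forall m, (1 <= q m)%nat)
  (xs : nat -> R) (Zs : nat -> nat -> R) (Gs : nat -> nat)
  (Hx_cv : forall p, (p < Np P)%nat -> Un_cv (fun m => x (q m) p) (xs p))
  (HZ_cv : forall j r, (j < Nt P)%nat -> (r < v P)%nat ->
      Un_cv (fun m => Z (q m - 1)%nat j r) (Zs j r))
  (HG_cv : forall j, (j < Nt P)%nat ->
      exists M, forall m, (M <= m)%nat -> G (q m - 1)%nat j = Gs j) :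
  (forall p, (p < Np P)%nat -> Un_cv (fun m => x (q m - 1)%nat p) (xs p)) /\
  (inX P xs /\ forall y, inX P y -> Fmaj P xs Zs Gs xs <= Fmaj P y Zs Gs xs) /\
  (forall y, inX P y -> (forall y', inX P y' -> Fmaj P y Zs Gs xs <= Fmaj P y' Zs Gs xs) ->
      forall p, (p < Np P)%nat -> y p = xs p).
Proof.
  destruct Hseq as [Hx0 [HG0 Hstep]].
  assert (HX : forall n, inX P (x n)).
  { intros [|n]; [auto| apply (proj1 (proj1 (Hstep n)))]. }
  assert (HV : forall n, valid_class P (G n)).
  { intros [|n]; [auto| apply (proj1 (proj2 (Hstep n)))]. }
  assert (Hqm : forall m, (m <= q m - 1)%nat).
  { intros m. assert (forall m, (m + 1 <= q m)%nat).
    { induction m0; [apply Hq_pos|]. specialize (Hq_incr m0). lia. }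
    specialize (H m). lia. }
  assert (HSq : forall m, S (q m - 1) = q m).
  { intros m. specialize (Hq_pos m). lia. }
  assert (HGs : forall j, (j < Nt P)%nat -> (Gs j < K P)%nat).
  { intros j Hj. destruct (HG_cv j Hj) as [M HM]. rewrite <- (HM M) by lia. apply HV; auto. }
  set (Gv := fun n => Lfun P (x n) + Rreg P (x n) (Z n) (G n)).
  set (Dn := fun n => Dq P (x (S n)) (x n) (Z n) (G n) (x n)).
  assert (Hdesc : forall n, Gv (S n) + Dn n / 4 <= Gv n).
  { intros n. unfold Gv, Dn.
    destruct (Hstep n) as [[HxS Hmin] [HVS Hsc]].
    pose proof (Hsc (Z n) (G n) (HV n)).
    pose proof (F_maj P (x (S n)) (Z n) (G n) (x n) HA Hmaj HxS (HX n)).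
    pose proof (Fmin_bound P (x (S n)) (x n) (Z n) (G n) (x n) HxS (HX n) Hmin).
    rewrite F_self in H1. lra. }
  assert (HDn0 : forall n, 0 <= Dn n).
  { intros n. apply Dq_nonneg; auto. }
  destruct (Lfun_lb P HA HI0 Hsig Hxmax) as [mlow Hmlow].
  assert (Hdec : Un_decreasing Gv).
  { intros n. pose proof (Hdesc n). pose proof (HDn0 n). lra. }
  assert (Hlb : has_lb Gv).
  { exists (- mlow). intros y [i ->]. unfold opp_seq, Gv.
    pose proof (Hmlow (x i) (HX i)). pose proof (Rreg_nonneg P (x i) (Z i) (G i) Htau Hbeta). lra. }
  destruct (decreasing_cv Gv Hdec Hlb) as [lG HlG].
  assert (HDcv : Un_cv Dn 0).
  { apply Un_cv_squeeze with (fun n => 4 * (Gv n - Gv (S n))).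
    - intros n. pose proof (Hdesc n). pose proof (HDn0 n). lra.
    - replace 0 with (4 * (lG - lG)) by ring. apply Un_cv_scal. apply CV_minus; auto.
      apply (Un_cv_sub Gv S); auto. }
  assert (HOd : forall j r, (j < Nt P)%nat -> (r < v P)%nat ->
     Un_cv (fun n => OmP P (G n j) j (x (S n)) r - OmP P (G n j) j (x n) r) 0).
  { intros j r Hj Hr. apply Un_cv_squeeze0 with Dn (2 * beta P * tau P j).
    - pose proof (Htau j Hj). nra.
    - intros n. unfold Dn. apply (Dq_term P _ _ _ (G n)); auto.
    - auto. }
  assert (Part1 : forall p, (p < Np P)%nat -> Un_cv (fun m => x (q m - 1)%nat p) (xs p)).
  { intros p Hp. destruct (Hcover p Hp) as [j [r0 [Hj [Hr0 Hpj]]]].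
    destruct (HG_cv j Hj) as [M HM].
    set (k := Gs j). assert (Hk : (k < K P)%nat) by (apply HGs; auto).
    destruct (LA.left_inverse (v P) (Om P k) (HOm k Hk)) as [B HB].
    set (w := fun m c => x (q m) (patch P j c) - x (q m - 1)%nat (patch P j c)).
    assert (Hw1 : forall r, (r < v P)%nat -> Un_cv (fun m => sumR (v P) (fun c => Om P k r c * w m c)) 0).
    { intros r Hr.
      apply Un_cv_ev with (fun m => (fun n => OmP P (G n j) j (x (S n)) r - OmP P (G n j) j (x n) r) (q m - 1)%nat).
      - exists M. intros m Hm. simpl. rewrite HM by auto. rewrite HSq. rewrite OmP_sub. reflexivity.
      - apply (Un_cv_sub (fun n => OmP P (G n j) j (x (S n)) r - OmP P (G n j) j (x n) r) (fun m => q m - 1)%nat); auto. }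
    assert (Hw : Un_cv (fun m => w m r0) 0).
    { apply Un_cv_ext with (fun m => sumR (v P) (fun r => B r0 r * sumR (v P) (fun c => Om P k r c * w m c))).
      - intros m. apply inv_apply; auto.
      - replace 0 with (sumR (v P) (fun r => B r0 r * 0)).
        + apply (Un_cv_sumR _ (fun m r => B r0 r * sumR (v P) (fun c => Om P k r c * w m c))).
          intros r Hr. apply Un_cv_scal. apply Hw1; auto.
        + rewrite (sumR_ext _ _ (fun r => 0 * B r0 r)) by (intros; ring). rewrite sumR_scal. ring. }
    replace (xs p) with (xs p - 0) by ring.
    apply Un_cv_ext with (fun m => x (q m) p - w m r0).
    - intros m. unfold w. rewrite Hpj. ring.
    - apply CV_minus; auto. }
  assert (HxsX : inX P xs).
  { intros p Hp. split.
    - apply (Un_cv_ge_const (fun m => x (q m) p)); auto. intros m. apply (HX (q m) p Hp).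
    - apply (Un_cv_le_const (fun m => x (q m) p)); auto. intros m. apply (HX (q m) p Hp). }
  assert (Part2 : forall y, inX P y -> Fmaj P xs Zs Gs xs <= Fmaj P y Zs Gs xs).
  { intros y Hy. rewrite !Fmaj_split.
    assert (Fsm P xs Zs Gs xs <= Fsm P y Zs Gs xs).
    { apply (Rle_cv_lim (Un := fun m => Fsm P (x (q m)) (Z (q m - 1)%nat) (G (q m - 1)%nat) (x (q m - 1)%nat))
                        (Vn := fun m => Fsm P y (Z (q m - 1)%nat) (G (q m - 1)%nat) (x (q m - 1)%nat))).
      - intros m. destruct (Hstep (q m - 1)%nat) as [[_ Hmin] _]. rewrite HSq in Hmin.
        specialize (Hmin y Hy). rewrite !Fmaj_split in Hmin. lra.
      - apply (Fsm_cv P (fun m => x (q m)) (fun m => x (q m - 1)%nat) (fun m => Z (q m - 1)%nat) (fun m => G (q m - 1)%nat)); auto.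
      - apply (Fsm_cv P (fun _ => y) (fun m => x (q m - 1)%nat) (fun m => Z (q m - 1)%nat) (fun m => G (q m - 1)%nat)); auto.
        intros; apply Un_cv_const. }
    lra. }
  split; [exact Part1|]. split; [split; auto|].
  intros y Hy Hymin p Hp.
  pose proof (Fmin_bound P xs y Zs Gs xs HxsX Hy Part2) as HD.
  pose proof (Hymin xs HxsX).
  destruct (Hcover p Hp) as [j [r0 [Hj [Hr0 Hpj]]]].
  set (k := Gs j). assert (Hk : (k < K P)%nat) by (apply HGs; auto).
  assert (Hz := HOm k Hk (fun c => xs (patch P j c) - y (patch P j c))).
  assert (xs (patch P j r0) - y (patch P j r0) = 0).
  { apply Hz; auto. intros r Hr. rewrite <- OmP_sub.
    pose proof (Dq_term P xs y Zs Gs xs j r HA Hc_pos Htau Hbeta HxsX Hj Hr).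
    pose proof (Htau j Hj).
    assert (0 <= 2 * beta P * tau P j) by nra.
    assert ((OmP P (Gs j) j xs r - OmP P (Gs j) j y r) ^ 2 <= 0).
    { destruct (Rle_or_lt ((OmP P (Gs j) j xs r - OmP P (Gs j) j y r) ^ 2) 0); auto.
      assert (0 < 2 * beta P * tau P j * (OmP P (Gs j) j xs r - OmP P (Gs j) j y r) ^ 2).
      { apply Rmult_lt_0_compat; auto. nra. }
      lra. }
    unfold k. nra. }
  rewrite <- Hpj. lra.
Qed.
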